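(* Let $S$ be a dense subsemigroup of $((0,\infty),+)$ and let $\mathcal{K}=\{A\subseteq S: S\setminus A \text{ is not piecewise syndetic near zero}\}$. Then $\mathcal{K}$ is a filter on $S$, $\mathrm{Cl}\,K(O^{+}(S))=\overline{\mathcal{K}}$, and this set is a compact subsemigroup of $\beta S$.
   Context: ''Dense'' means dense in the usual topology of $(0,\infty)$. $\beta S$ is the Stone–Čech compactification of the discrete set $S$ (ultrafilters on $S$), with $+$ extended so that $(\beta S,+)$ is a compact right topological semigroup: $A\in p+q$ iff $\{x\in S:-x+A\in q\}\in p$, where $-x+A=\{y\in S:x+y\in A\}$. $O^{+}(S)=\{p\in\beta S: S\cap(0,\epsilon)\in p\text{ for every }\epsilon>0\}$, a compact right topological subsemigroup of $\beta S$; $K(O^{+}(S))$ is its smallest two-sided ideal and $\mathrm{Cl}$ denotes closure in $\beta S$. For a filter $\mathcal{K}$ on $S$, $\overline{\mathcal{K}}=\{p\in\beta S:\mathcal{K}\subseteq p\}$. A subset $A\subseteq S$ is piecewise syndetic near zero iff there exist sequences $\langle F_n\rangle_{n=1}^\infty$ and $\langle\delta_n\rangle_{n=1}^\infty$ such that (1) for each $n\in\mathbb{N}$, $F_n$ is a finite nonempty subset of $(0,\frac1n)\cap S$ and $\delta_n\in(0,\frac1n)$, and (2) for every finite nonempty $G\subseteq S$ and every $\mu>0$ there is $x\in(0,\mu)\cap S$ such that for all $n\in\mathbb{N}$, $(G\cap(0,\delta_n))+x\subseteq\bigcup_{t\in F_n}(-t+A)$. *)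

(* Defs.v *)
From Stdlib Require Import Reals List.
Open Scope R_scope.

(* Subsets of R are predicates R -> Prop; a point of beta S (an ultrafilter
   on S) is a family of subsets of S, i.e. a predicate (R -> Prop) -> Prop. *)
Definition rset := R -> Prop.
Definition ufam := rset -> Prop.

Definition subset (A B : rset) : Prop := forall x, A x -> B x.

Definition dense_subsemigroup (S : rset) : Prop :=
  (forall x, S x -> 0 < x) /\
  (forall x y, S x -> S y -> S (x + y)) /\
  (forall a b, 0 <= a -> a < b -> exists x, S x /\ a < x /\ x < b).

Definition shift (S : rset) (x : R) (A : rset) : rset :=
  fun y => S y /\ A (x + y).

Definition is_filter (S : rset) (F : ufam) : Prop :=
  (forall A, F A -> subset A S) /\
  F S /\
  ~ F (fun _ => False) /\
  (forall A B, F A -> F B -> F (fun x => A x /\ B x)) /\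
  (forall A B, F A -> subset A B -> subset B S -> F B).

Definition is_ultra (S : rset) (p : ufam) : Prop :=
  is_filter S p /\
  (forall A, subset A S -> p A \/ p (fun x => S x /\ ~ A x)).

Definition uplus (S : rset) (p q : ufam) : ufam :=
  fun A => subset A S /\ p (fun x => S x /\ q (shift S x A)).

Definition Oplus (S : rset) (p : ufam) : Prop :=
  is_ultra S p /\
  forall eps, 0 < eps -> p (fun x => S x /\ 0 < x /\ x < eps).

(* two-sided ideals of O^+(S) and the smallest ideal K(O^+(S))
   (the intersection of all ideals, which is the smallest ideal) *)
Definition is_ideal_Oplus (S : rset) (I : ufam -> Prop) : Prop :=
  (forall p, I p -> Oplus S p) /\
  (exists p, I p) /\
  (forall p q, Oplus S p -> I q -> I (uplus S p q)) /\
  (forall p q, I p -> Oplus S q -> I (uplus S p q)).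

Definition K_Oplus (S : rset) (p : ufam) : Prop :=
  Oplus S p /\ forall I, is_ideal_Oplus S I -> I p.

Definition Cl (S : rset) (X : ufam -> Prop) (p : ufam) : Prop :=
  is_ultra S p /\ forall A, p A -> exists q, X q /\ q A.

Definition is_open (S : rset) (U : ufam -> Prop) : Prop :=
  forall p, U p -> is_ultra S p /\
    exists A, p A /\ forall q, is_ultra S q -> q A -> U q.

Definition compact (S : rset) (X : ufam -> Prop) : Prop :=
  forall (I : Type) (U : I -> ufam -> Prop),
    (forall i, is_open S (U i)) ->
    (forall p, X p -> exists i, U i p) ->
    exists l : list I, forall p, X p -> exists i, In i l /\ U i p.

Definition compact_subsemigroup (S : rset) (X : ufam -> Prop) : Prop :=
  (forall p, X p -> is_ultra S p) /\
  (exists p, X p) /\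
  (forall p q, X p -> X q -> X (uplus S p q)) /\
  compact S X.

(* piecewise syndetic near zero; sequences indexed by n >= 1 *)
Definition PSNZ (S : rset) (A : rset) : Prop :=
  exists (F : nat -> list R) (delta : nat -> R),
    (forall n, (1 <= n)%nat ->
       F n <> nil /\
       (forall t, In t (F n) -> S t /\ 0 < t /\ t < / INR n) /\
       0 < delta n /\ delta n < / INR n) /\
    (forall (G : list R) (mu : R),
       G <> nil -> (forall g, In g G -> S g) -> 0 < mu ->
       exists x, S x /\ 0 < x /\ x < mu /\
         forall n, (1 <= n)%nat ->
           forall g, In g G -> 0 < g -> g < delta n ->
             exists t, In t (F n) /\ shift S t A (g + x)).

Definition Kfam (S : rset) (A : rset) : Prop :=
  subset A S /\ ~ PSNZ S (fun x => S x /\ ~ A x).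

Definition Kbar (S : rset) (F : ufam) (p : ufam) : Prop :=
  is_ultra S p /\ forall A, F A -> p A.

(* Main.v *)
Require Import Defs.
From Stdlib Require Import Reals List Lra Lia Classical ClassicalEpsilon FunctionalExtensionality PropExtensionality.
From mathcomp Require classical_sets boolp.
Open Scope R_scope.

Lemma zorn_wrap (T : Type) (P : (T -> Prop) -> Prop) :
 (forall F : (T->Prop) -> Prop, (forall G, F G -> P G) ->
   (forall G1 G2, F G1 -> F G2 -> (forall x, G1 x -> G2 x) \/ (forall x, G2 x -> G1 x)) ->
   P (fun x => exists G, F G /\ G x)) ->
 exists A, P A /\ forall B, (forall x, A x -> B x) -> ~ (forall x, B x -> A x) -> ~ P B.
Proof.
intros H.
destruct (@classical_sets.Zorn_bigcup T P) as [A [PA HA]].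
- intros F FP Ftot.
  assert (E : classical_sets.bigcup F (fun X => X) = (fun x => exists G, F G /\ G x)).
  { apply boolp.funext; intro x; apply boolp.propext; split.
    - intros [G FG Gx]; exists G; auto.
    - intros [G [FG Gx]]; exists G; auto. }
  rewrite E. apply H. exact FP.
  intros G1 G2 h1 h2; destruct (Ftot G1 G2 h1 h2) as [h|h]; [left|right]; exact h.
- exists A; split; auto. intros B h1 h2 PB. apply (HA B); auto. split; auto.
Qed.

Lemma filt_sup S F A B : is_filter S F -> F A -> subset A B -> subset B S -> F B.
Proof. intros [_ [_ [_ [_ H]]]]; eauto. Qed.

Lemma filt_sub S F A : is_filter S F -> F A -> subset A S.
Proof. intros [H _]; eauto. Qed.

Lemma filt_S S F : is_filter S F -> F S.
Proof. intros [_ [H _]]; eauto. Qed.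

Lemma filt_int S F A B : is_filter S F -> F A -> F B -> F (fun x => A x /\ B x).
Proof. intros [_ [_ [_ [H _]]]]; eauto. Qed.

Lemma filt_ne S F A : is_filter S F -> F A -> exists x, A x.
Proof.
intros HF HA. apply NNPP; intro hn.
destruct HF as [h1 [h2 [h3 [h4 h5]]]]. apply h3.
apply (h5 A); auto. intros x Ax; apply hn; eauto. intros x [].
Qed.

Lemma filt_ne2 S F A : is_filter S F -> F A -> exists x, S x /\ A x.
Proof.
intros HF HA. destruct (filt_ne S F A HF HA) as [x Ax].
exists x; split; auto. apply (filt_sub S F A HF HA x Ax).
Qed.

Lemma filt_eqv S F A B : is_filter S F -> F A -> (forall x, S x -> A x -> B x) -> subset B S -> F B.
Proof.
intros HF HA H HB. apply (filt_sup S F (fun x => A x /\ S x)); auto.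
- apply (filt_sup S F A); auto. intros x Ax; split; auto. apply (filt_sub S F A HF HA x Ax).
  intros x [h1 h2]; auto.
- intros x [h1 h2]; auto.
Qed.

Lemma filt_list S F (L : list rset) : is_filter S F -> (forall B, In B L -> F B) ->
  F (fun x => S x /\ forall B, In B L -> B x).
Proof.
intros HF; induction L as [|C L IH]; intros HL.
- apply (filt_sup S F S); auto. apply filt_S; auto. intros x Sx; split; auto. intros B [].
  intros y [h _]; auto.
- assert (H1 := IH (fun B h => HL B (or_intror h))).
  assert (H2 := filt_int S F _ _ HF H1 (HL C (or_introl eq_refl))).
  apply (filt_sup S F _ _ HF H2).
  + intros y [[Sy h] Cy]; split; auto. intros B [e|h']. subst B; auto. apply h; exact h'.
  + intros y [h _]; auto.
Qed.

Lemma filt_nat S F (E : nat -> rset) N : is_filter S F -> (forall n, F (E n)) ->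
  F (fun x => S x /\ forall n, (n < N)%nat -> E n x).
Proof.
intros HF HE; induction N as [|N IH].
- apply (filt_sup S F S); auto. apply filt_S; auto. intros x Sx; split; auto. intros n h; lia.
  intros y [h _]; auto.
- assert (H2 := filt_int S F _ _ HF IH (HE N)).
  apply (filt_sup S F _ _ HF H2).
  intros x [[Sx h] Cx]; split; auto. intros n hn.
  destruct (Nat.eq_dec n N) as [->|hne]; auto. apply h; lia.
  intros y [h _]; auto.
Qed.

Lemma ultra_filt S p : is_ultra S p -> is_filter S p.
Proof. intros [h _]; auto. Qed.

Lemma ultra_dich S p A : is_ultra S p -> subset A S -> p A \/ p (fun x => S x /\ ~ A x).
Proof. intros [_ h]; auto. Qed.

Lemma ultra_not S p A : is_ultra S p -> subset A S -> ~ p A -> p (fun x => S x /\ ~ A x).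
Proof. intros H1 H2 H3; destruct (ultra_dich S p A H1 H2); tauto. Qed.

Lemma ultra_notboth S p A : is_ultra S p -> p A -> p (fun x => S x /\ ~ A x) -> False.
Proof.
intros H1 H2 H3. destruct (filt_ne S p _ (ultra_filt S p H1) (filt_int S p _ _ (ultra_filt S p H1) H2 H3))
 as [x [h1 [_ h2]]]; auto.
Qed.

Lemma ultra_union S p (X : R -> rset) (l : list R) : is_ultra S p ->
  (forall t, subset (X t) S) ->
  p (fun y => S y /\ exists t, In t l /\ X t y) -> exists t, In t l /\ p (X t).
Proof.
intros Hu HX; induction l as [|a l IH]; intros H.
- destruct (filt_ne S p _ (ultra_filt S p Hu) H) as [x [_ [t [[] _]]]].
- destruct (ultra_dich S p (X a) Hu (HX a)) as [h|h].
  + exists a; split; simpl; auto.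
  + destruct IH as [t [h1 h2]].
    * apply (filt_sup S p _ _ (ultra_filt S p Hu) (filt_int S p _ _ (ultra_filt S p Hu) H h)).
      intros y [[Sy [t [[<-|ht] Xt]]] [_ nX]]. contradiction. split; eauto.
      intros y [h' _]; auto.
    * exists t; split; simpl; auto.
Qed.

Lemma ultra_eq S p q : is_ultra S p -> is_ultra S q -> (forall A, p A -> q A) -> p = q.
Proof.
intros Hp Hq H. apply functional_extensionality; intro A; apply propositional_extensionality.
split; auto. intros qA.
destruct (ultra_dich S p A Hp (filt_sub S q A (ultra_filt S q Hq) qA)) as [h|h]; auto.
exfalso; apply (ultra_notboth S q A Hq qA (H _ h)).
Qed.

Lemma uplus_ultra S p q : dense_subsemigroup S -> is_ultra S p -> is_ultra S q -> is_ultra S (uplus S p q).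
Proof.
intros [HS1 [HS2 HS3]] Hp Hq. unfold uplus, shift in *.
assert (Fp := ultra_filt S p Hp). assert (Fq := ultra_filt S q Hq).
split; [split; [|split; [|split; [|split]]]|].
- intros A [h _]; auto.
- split. intros x h; auto.
  apply (filt_sup S p S); auto. apply filt_S; auto.
  + intros x Sx; split; auto. apply (filt_sup S q S); auto. apply filt_S; auto.
    intros y Sy; split; auto. intros y [h _]; auto.
  + intros x [h _]; auto.
- intros [_ h]. destruct (filt_ne S p _ Fp h) as [x [Sx hq]].
  destruct (filt_ne S q _ Fq hq) as [y [_ []]].
- intros A B [hA pA] [hB pB]. split. intros x [h _]; auto.
  apply (filt_sup S p _ _ Fp (filt_int S p _ _ Fp pA pB)).
  + intros x [[Sx qA] [_ qB]]; split; auto.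
    apply (filt_sup S q _ _ Fq (filt_int S q _ _ Fq qA qB)).
    intros y [[Sy a] [_ b]]; split; auto.
    intros y [h _]; auto.
  + intros x [h _]; auto.
- intros A B [hA pA] AB BS. split; auto.
  apply (filt_sup S p _ _ Fp pA).
  + intros x [Sx qA]; split; auto. apply (filt_sup S q _ _ Fq qA).
    intros y [Sy a]; split; auto. intros y [h _]; auto.
  + intros x [h _]; auto.
- intros A AS.
  destruct (ultra_dich S p (fun x => S x /\ q (shift S x A)) Hp) as [h|h].
  + intros x [h _]; auto.
  + left; split; auto.
  + right; split. intros x [h' _]; auto.
    apply (filt_sup S p _ _ Fp h).
    * intros x [Sx nq]; split; auto.
      assert (nq' : ~ q (shift S x A)) by tauto.
      apply (filt_sup S q _ _ Fq (ultra_not S q _ Hq (fun y h => proj1 h) nq')).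
      intros y [Sy n]; split; auto.
      intros y [h' _]; auto.
    * intros x [h' _]; auto.
Qed.

Lemma Oplus_ultra S p : Oplus S p -> is_ultra S p.
Proof. intros [h _]; auto. Qed.

Lemma uplus_Oplus S p q : dense_subsemigroup S -> Oplus S p -> Oplus S q -> Oplus S (uplus S p q).
Proof.
intros HS [Hp Ep] [Hq Eq]. split. apply uplus_ultra; auto.
destruct HS as [HS1 [HS2 HS3]].
intros e he. split. intros x [h _]; auto.
apply (filt_sup S p _ _ (ultra_filt S p Hp) (Ep (e/2) ltac:(lra))).
- intros x [Sx [x0 xe]]; split; auto.
  apply (filt_sup S q _ _ (ultra_filt S q Hq) (Eq (e/2) ltac:(lra))).
  intros y [Sy [y0 ye]]; split; auto. split; auto. split; auto. lra.
  intros y [h _]; auto.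
- intros x [h _]; auto.
Qed.

Lemma uplus_assoc S p q r : dense_subsemigroup S -> is_filter S p -> is_filter S q -> is_filter S r ->
  uplus S p (uplus S q r) = uplus S (uplus S p q) r.
Proof.
intros [HS1 [HS2 HS3]] Fp Fq Fr.
apply functional_extensionality; intro A; apply propositional_extensionality.
assert (key : forall x y, S x -> S y ->
  (r (shift S y (shift S x A)) <-> r (shift S (x + y) A))).
{ intros x y Sx Sy; split; intro h.
  - apply (filt_sup S r _ _ Fr h). intros w [Sw [_ a]]; split; auto. rewrite Rplus_assoc; auto.
    intros w [h' _]; auto.
  - apply (filt_sup S r _ _ Fr h). intros w [Sw a]; split; auto. split; auto. rewrite <- Rplus_assoc; auto.
    intros w [h' _]; auto. }
assert (key2 : forall x, S x -> (q (fun y => S y /\ r (shift S y (shift S x A))) <->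
   q (shift S x (fun z => S z /\ r (shift S z A))))).
{ intros x Sx; split; intro h.
  - apply (filt_sup S q _ _ Fq h). intros y [Sy a]; split; auto. split; auto.
    apply key; auto. intros y [h' _]; auto.
  - apply (filt_sup S q _ _ Fq h). intros y [Sy [_ a]]; split; auto. apply key; auto.
    intros y [h' _]; auto. }
unfold uplus; split.
- intros [AS h]. split; auto. split. intros z [h' _]; auto.
  apply (filt_sup S p _ _ Fp h). intros x [Sx [_ a]]; split; auto. apply key2; auto.
  intros x [h' _]; auto.
- intros [AS [_ h]]. split; auto.
  apply (filt_sup S p _ _ Fp h). intros x [Sx a]; split; auto. split. intros y [h' _]; auto.
  apply key2; auto. intros x [h' _]; auto.
Qed.

Definition FIP (S : rset) (H : ufam) := forall L, (forall B, In B L -> H B) ->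
  exists x, S x /\ forall B, In B L -> B x.

Lemma FIP_mono S H H' : FIP S H -> (forall B, H' B -> H B) -> FIP S H'.
Proof. intros h1 h2 L hL; apply h1; auto. Qed.

Lemma split_list (H : ufam) (A : rset) L : (forall C, In C L -> H C \/ C = A) ->
  exists L', (forall C, In C L' -> H C) /\ forall x, (forall C, In C L' -> C x) -> A x -> forall C, In C L -> C x.
Proof.
induction L as [|D L IH]; intros hL.
- exists nil; split. intros C []. intros x _ _ C [].
- destruct IH as [L' [h1 h2]]. intros C hC; apply hL; simpl; auto.
  destruct (hL D (or_introl eq_refl)) as [hD| ->].
  + exists (D :: L'); split.
    * intros C [<-|hC]; auto.
    * intros x hx ax C [<-|hC]. apply hx; simpl; auto. apply (h2 x); auto. intros C' hC'; apply hx; simpl; auto.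
  + exists L'; split; auto. intros x hx ax C [<-|hC]; auto. apply (h2 x); auto.
Qed.

Lemma UL S (F : ufam) : (forall B, F B -> subset B S) -> FIP S F ->
  exists p, is_ultra S p /\ forall B, F B -> p B.
Proof.
intros FS FF.
set (P := fun G : ufam => FIP S (fun B => F B \/ G B)).
destruct (zorn_wrap rset P) as [G [PG GM]].
{ intros Fc FcP Fctot L hL.
  assert (claim : exists G0, P G0 /\ (forall G, Fc G -> (forall x, G x -> G0 x) \/ (forall x, G0 x -> G x))
     /\ forall B, In B L -> F B \/ G0 B).
  { revert hL. induction L as [|B L IH]; intros hL.
    - exists (fun _ => False); split; [|split].
      + apply (FIP_mono S F); auto. intros B [h|[]]; auto.
      + intros G _; right; intros x [].
      + intros B [].
    - destruct IH as [G0 [P0 [T0 L0]]]. intros C hC; apply hL; simpl; auto.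
      destruct (hL B (or_introl eq_refl)) as [hB|[G1 [FG1 G1B]]].
      + exists G0; split; [|split]; auto. intros C [<-|hC]; auto.
      + destruct (T0 G1 FG1) as [h|h].
        * exists G0; split; [|split]; auto. intros C [<-|hC]; auto.
        * exists G1; split; [|split].
          -- apply FcP; auto.
          -- intros G FG; destruct (Fctot G G1 FG FG1); auto.
          -- intros C [<-|hC]; auto. destruct (L0 C hC); auto.
  }
  destruct claim as [G0 [P0 [_ L0]]]. apply P0. exact L0. }
destruct (classic (exists p, is_ultra S p /\ forall B, F B -> p B)) as [h|h]; [exact h|exfalso].
set (p := fun B => subset B S /\ exists L, (forall C, In C L -> F C \/ G C) /\
   forall x, S x -> (forall C, In C L -> C x) -> B x).
apply h; exists p.
assert (Fil : is_filter S p).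
{ split; [|split; [|split; [|split]]].
  - intros A [h1 _]; auto.
  - split. intros x hx; auto. exists nil; split. intros C []. intros x Sx _; auto.
  - intros [_ [L [h1 h2]]]. destruct (PG L h1) as [x [Sx hx]]. apply (h2 x Sx hx).
  - intros A B [hA [L1 [a1 a2]]] [hB [L2 [b1 b2]]]. split. intros x [hx _]; auto.
    exists (L1 ++ L2); split.
    + intros C hC; apply in_app_iff in hC; destruct hC; auto.
    + intros x Sx hx; split; [apply a2|apply b2]; auto; intros C hC; apply hx; apply in_app_iff; auto.
  - intros A B [hA [L [a1 a2]]] AB BS. split; auto. exists L; split; auto. }
split; [split; auto|].
- intros A AS. destruct (classic (G A)) as [hG|hG].
  + left; split; auto. exists (A :: nil); split. intros C [<-|[]]; auto.
    intros x _ hx; apply hx; simpl; auto.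
  + right.
    assert (nP : ~ P (fun C => G C \/ C = A)).
    { apply GM. intros x hx; auto. intro hs. apply hG. apply hs; right; reflexivity. }
    unfold P, FIP in nP. apply not_all_ex_not in nP. destruct nP as [L nL].
    apply imply_to_and in nL. destruct nL as [hL nx].
    destruct (split_list (fun C => F C \/ G C) A L) as [L' [h1 h2]].
    { intros C hC. destruct (hL C hC) as [a|[a|a]]; auto. }
    split. intros x [hx _]; auto. exists L'; split; auto.
    intros x Sx hx; split; auto. intro ax. apply nx. exists x; split; auto. intros B FB; apply (h2 x); auto.
- intros B FB. unfold p. split; auto. exists (B :: nil); split. intros C [<-|[]]; auto.
  intros x _ hx; apply hx; simpl; auto.
Qed.

Definition small (S : rset) (e : R) : rset := fun x => S x /\ 0 < x /\ x < e.

Lemma exists_small S e : dense_subsemigroup S -> 0 < e -> exists x, S x /\ 0 < x /\ x < e.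
Proof.
intros [h1 [h2 h3]] he. destruct (h3 0 e) as [x [Sx [a b]]]; try lra. exists x; auto.
Qed.

Lemma arch g : 0 < g -> exists N, (1 <= N)%nat /\ forall n, (N <= n)%nat -> / INR n < g.
Proof.
intros hg. destruct (INR_archimed 1 (/ g)) as [n hn]; [lra|].
exists (S n); split; [lia|]. intros m hm.
assert (h1 : INR (S n) <= INR m) by (apply le_INR; lia).
rewrite S_INR in h1.
assert (h2 : / g < INR m) by lra.
assert (h3 : 0 < / g) by (apply Rinv_0_lt_compat; lra).
rewrite <- (Rinv_inv g). apply Rinv_lt_contravar; auto.
apply Rmult_lt_0_compat; lra.
Qed.

Lemma inv_pos n : (1 <= n)%nat -> 0 < / INR n.
Proof.
intros h. apply Rinv_0_lt_compat. apply lt_0_INR; lia.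
Qed.

Lemma Oplus_exists S : dense_subsemigroup S -> exists p, Oplus S p.
Proof.
intros HS.
assert (A1 : forall B, (exists e, 0 < e /\ B = small S e) -> subset B S).
{ intros B [e [he ->]] x [h _]; auto. }
assert (A2 : FIP S (fun B => exists e, 0 < e /\ B = small S e)).
{ intros L hL.
  assert (claim : exists eta, 0 < eta /\ forall x, S x -> 0 < x -> x < eta -> forall B, In B L -> B x).
  { clear -hL. induction L as [|C L IH].
    - exists 1; split; [lra|]. intros x _ _ _ B [].
    - destruct IH as [eta [he h]]. intros B hB; apply hL; simpl; auto.
      destruct (hL C (or_introl eq_refl)) as [e [hee ->]].
      exists (Rmin eta e); split. apply Rmin_glb_lt; auto.
      intros x Sx x0 xe B [<-|hB].
      + unfold small; split; auto. split; auto. assert (Rmin eta e <= e) by apply Rmin_r. lra.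
      + apply h; auto. assert (Rmin eta e <= eta) by apply Rmin_l. lra. }
  destruct claim as [eta [he h]]. destruct (exists_small S eta HS he) as [x [Sx [a b]]].
  exists x; split; auto. intros B hB; apply h; auto. }
destruct (UL S _ A1 A2) as [p [Hp hp]].
exists p; split; auto. intros e he. apply hp. exists e; split; auto.
Qed.

Lemma Cl_Oplus S X p : (forall q, X q -> Oplus S q) -> Cl S X p -> Oplus S p.
Proof.
intros HX [Hp HC]. split; auto. intros e he. apply NNPP; intro hn.
assert (h := ultra_not S p _ Hp (fun x h => proj1 h) hn).
destruct (HC _ h) as [q [Xq qh]].
destruct (HX q Xq) as [Hq Eq].
apply (ultra_notboth S q _ Hq (Eq e he) qh).
Qed.

Definition Mset S q := Oplus S q /\ forall r, Oplus S r -> exists s, Oplus S s /\ uplus S s (uplus S r q) = q.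

Lemma Of S p : Oplus S p -> is_filter S p.
Proof. intros h; apply ultra_filt, Oplus_ultra; auto. Qed.

Lemma uOf S p q : dense_subsemigroup S -> Oplus S p -> Oplus S q -> is_filter S (uplus S p q).
Proof. intros; apply Of, uplus_Oplus; auto. Qed.

Lemma M_left S u q : dense_subsemigroup S -> Oplus S u -> Mset S q -> Mset S (uplus S u q).
Proof.
intros HS Ou [Oq Mq]. split. apply uplus_Oplus; auto.
intros r Or. destruct (Mq (uplus S r u) (uplus_Oplus S r u HS Or Ou)) as [s' [Os' e]].
exists (uplus S u s'); split. apply uplus_Oplus; auto.
rewrite (uplus_assoc S r u q HS (Of S r Or) (Of S u Ou) (Of S q Oq)).
rewrite <- (uplus_assoc S u s' _ HS (Of S u Ou) (Of S s' Os')).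
rewrite e; auto.
apply uOf; auto. apply uplus_Oplus; auto.
Qed.

Lemma M_right S q u : dense_subsemigroup S -> Mset S q -> Oplus S u -> Mset S (uplus S q u).
Proof.
intros HS [Oq Mq] Ou. split. apply uplus_Oplus; auto.
intros r Or. destruct (Mq r Or) as [s [Os e]].
exists s; split; auto.
rewrite (uplus_assoc S r q u HS (Of S r Or) (Of S q Oq) (Of S u Ou)).
rewrite (uplus_assoc S s (uplus S r q) u HS (Of S s Os) (uOf S r q HS Or Oq) (Of S u Ou)).
rewrite e; auto.
Qed.

Lemma M_K S q : Mset S q -> K_Oplus S q.
Proof.
intros [Oq Mq]. split; auto. intros I [Isub [[r Ir] [Il Ir2]]].
destruct (Mq r (Isub r Ir)) as [s [Os e]]. rewrite <- e.
apply Il; auto.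
Qed.

Lemma K_M S q : dense_subsemigroup S -> (exists q0, Mset S q0) -> K_Oplus S q -> Mset S q.
Proof.
intros HS ne [Oq Kq]. apply Kq. split; [|split; [|split]].
- intros p [h _]; auto.
- exact ne.
- intros p q' Op Mq'. apply M_left; auto.
- intros p q' Mp Oq'. apply M_right; auto.
Qed.

Lemma CL S (I : Type) (D : I -> rset) : dense_subsemigroup S -> (forall i, subset (D i) S) ->
  (forall r, Oplus S r -> exists i, r (D i)) ->
  exists l : list I, exists eta, 0 < eta /\ forall y, S y -> 0 < y -> y < eta -> exists i, In i l /\ D i y.
Proof.
intros HS DS Hc. apply NNPP; intro H.
assert (H' : forall l eta, 0 < eta -> exists y, S y /\ 0 < y /\ y < eta /\ forall i, In i l -> ~ D i y).
{ intros l eta he. apply NNPP; intro hn. apply H. exists l, eta; split; auto.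
  intros y Sy y0 ye. apply NNPP; intro hn2. apply hn. exists y; repeat split; auto.
  intros i hi di. apply hn2; exists i; auto. }
set (Fam := fun B => (exists e, 0 < e /\ B = small S e) \/ (exists i, B = fun y => S y /\ ~ D i y)).
assert (A1 : forall B, Fam B -> subset B S).
{ intros B [[e [he ->]]|[i ->]] x [h _]; auto. }
assert (A2 : FIP S Fam).
{ intros L hL.
  assert (claim : exists eta l, 0 < eta /\ forall y, S y -> 0 < y -> y < eta -> (forall i, In i l -> ~ D i y) -> forall B, In B L -> B y).
  { clear -hL. induction L as [|C L IH].
    - exists 1, nil; split; [lra|]. intros y _ _ _ _ B [].
    - destruct IH as [eta [l [he h]]]. intros B hB; apply hL; simpl; auto.
      destruct (hL C (or_introl eq_refl)) as [[e [hee ->]]|[i ->]].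
      + exists (Rmin eta e), l; split. apply Rmin_glb_lt; auto.
        intros y Sy y0 ye nd B [<-|hB].
        * unfold small; split; auto. split; auto. assert (Rmin eta e <= e) by apply Rmin_r. lra.
        * apply h; auto. assert (Rmin eta e <= eta) by apply Rmin_l. lra.
      + exists eta, (i :: l); split; auto.
        intros y Sy y0 ye nd B [<-|hB].
        * split; auto. apply nd; simpl; auto.
        * apply h; auto. intros j hj; apply nd; simpl; auto. }
  destruct claim as [eta [l [he h]]]. destruct (H' l eta he) as [y [Sy [a [b c]]]].
  exists y; split; auto. intros B hB; apply h; auto. }
destruct (UL S _ A1 A2) as [r [Hr hr]].
assert (Or : Oplus S r).
{ split; auto. intros e he. apply hr. left; exists e; auto. }
destruct (Hc r Or) as [i ri].
apply (ultra_notboth S r (D i) Hr ri). apply hr. right; exists i; auto.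
Qed.

Lemma img_closed S q p : dense_subsemigroup S -> is_ultra S q -> is_ultra S p ->
  (forall A, p A -> exists s, Oplus S s /\ uplus S s q A) ->
  exists s, Oplus S s /\ uplus S s q = p.
Proof.
intros HS Hq Hp H.
set (DA := fun A => fun x => S x /\ q (shift S x A)).
set (Fam := fun B => (exists e, 0 < e /\ B = small S e) \/ (exists A, p A /\ B = DA A)).
assert (A1 : forall B, Fam B -> subset B S).
{ intros B [[e [he ->]]|[A [_ ->]]] x [h _]; auto. }
assert (Fp := ultra_filt S p Hp). assert (Fq := ultra_filt S q Hq).
assert (A2 : FIP S Fam).
{ intros L hL.
  assert (claim : exists eta A0, 0 < eta /\ p A0 /\ forall x, S x -> 0 < x -> x < eta -> DA A0 x -> forall B, In B L -> B x).
  { clear -hL Fp Fq. induction L as [|C L IH].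
    - exists 1, S; split; [lra|split]. apply filt_S; auto. intros y _ _ _ _ B [].
    - destruct IH as [eta [A0 [he [pA0 h]]]]. intros B hB; apply hL; simpl; auto.
      destruct (hL C (or_introl eq_refl)) as [[e [hee ->]]|[A [pA ->]]].
      + exists (Rmin eta e), A0; split. apply Rmin_glb_lt; auto. split; auto.
        intros y Sy y0 ye nd B [<-|hB].
        * unfold small; split; auto. split; auto. assert (Rmin eta e <= e) by apply Rmin_r. lra.
        * apply h; auto. assert (Rmin eta e <= eta) by apply Rmin_l. lra.
      + exists eta, (fun x => A0 x /\ A x); split; auto. split. apply (filt_int S p); auto.
        intros y Sy y0 ye [_ qd] B [<-|hB].
        * split; auto. apply (filt_sup S q _ _ Fq qd). intros z [Sz [_ a]]; split; auto.
          intros z [h' _]; auto.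
        * apply h; auto. split; auto. apply (filt_sup S q _ _ Fq qd). intros z [Sz [a _]]; split; auto.
          intros z [h' _]; auto. }
  destruct claim as [eta [A0 [he [pA0 h]]]].
  destruct (H A0 pA0) as [s [Os [_ sD]]].
  destruct (filt_ne S s _ (Of S s Os) (filt_int S s _ _ (Of S s Os) sD (proj2 Os eta he))) as [x [dx [Sx [a b]]]].
  exists x; split; auto. intros B hB; apply h; auto. }
destruct (UL S _ A1 A2) as [s [Hs hs]].
assert (Os : Oplus S s).
{ split; auto. intros e he. apply hs. left; exists e; auto. }
exists s; split; auto. symmetry. apply (ultra_eq S); auto.
apply uplus_ultra; auto.
intros A pA. split. apply (filt_sub S p A Fp pA). apply hs. right; exists A; auto.
Qed.

Lemma Cl_mono S (X Y : ufam -> Prop) p : (forall q, X q -> Y q) -> Cl S X p -> Cl S Y p.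
Proof.
intros h [Hp H]; split; auto. intros A pA. destruct (H A pA) as [q [a b]]; eauto.
Qed.

Definition LU S (U : ufam -> Prop) := fun p => Oplus S p /\ ~ U p.

Definition PZ S (U : ufam -> Prop) := (exists p, LU S U p) /\ (forall p, Cl S (LU S U) p -> LU S U p) /\
  (forall r q, Oplus S r -> LU S U q -> LU S U (uplus S r q)).

Lemma PZ_empty S : dense_subsemigroup S -> PZ S (fun _ => False).
Proof.
intros HS. split; [|split].
- destruct (Oplus_exists S HS) as [p Op]; exists p; split; auto.
- intros p h; split; auto. apply (Cl_Oplus S (LU S (fun _ => False))); auto. intros q [a _]; auto.
- intros r q Or [Oq _]; split; auto. apply uplus_Oplus; auto.
Qed.

Lemma M_exists S : dense_subsemigroup S -> exists q, Mset S q.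
Proof.
intros HS.
destruct (zorn_wrap ufam (PZ S)) as [U [PU UM]].
{ intros Fc FcP Fctot.
  set (Fam := fun B => (exists e, 0 < e /\ B = small S e) \/
      (subset B S /\ exists G, Fc G /\ forall q, LU S G q -> q B)).
  assert (A1 : forall B, Fam B -> subset B S).
  { intros B [[e [he ->]]|[h _]]; auto. intros x [h _]; auto. }
  assert (A2 : FIP S Fam).
  { intros L hL.
    assert (claim : exists G0, PZ S G0 /\ (forall G, Fc G -> (forall x, G x -> G0 x) \/ (forall x, G0 x -> G x))
       /\ forall q, LU S G0 q -> forall B, In B L -> q B).
    { revert hL. induction L as [|B L IH]; intros hL.
      - exists (fun _ => False); split; [|split].
        + apply PZ_empty; auto.
        + intros G _; right; intros x [].
        + intros q _ B [].
      - destruct IH as [G0 [P0 [T0 L0]]]. intros C hC; apply hL; simpl; auto.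
        destruct (hL B (or_introl eq_refl)) as [[e [he ->]]|[BS [G1 [FG1 G1B]]]].
        + exists G0; split; [|split]; auto. intros q hq C [<-|hC].
          * destruct hq as [[_ Eq] _]. apply Eq; auto.
          * apply (L0 q hq C hC).
        + destruct (T0 G1 FG1) as [h|h].
          * exists G0; split; [|split]; auto. intros q hq C [<-|hC].
            -- apply G1B. destruct hq as [a b]; split; auto.
            -- apply (L0 q hq C hC).
          * exists G1; split; [|split].
            -- apply FcP; auto.
            -- intros G FG; destruct (Fctot G G1 FG FG1); auto.
            -- intros q hq C [<-|hC]. apply G1B; auto. apply L0; auto. destruct hq as [a b]; split; auto. }
    destruct claim as [G0 [[[q0 Lq0] _] [_ L0]]].
    assert (Fq0 : is_filter S q0) by (apply Of; destruct Lq0; auto).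
    destruct (filt_ne2 S q0 _ Fq0 (filt_list S q0 L Fq0 (L0 q0 Lq0))) as [x [Sx [_ hx]]].
    exists x; split; auto. }
  destruct (UL S _ A1 A2) as [p [Hp hp]].
  assert (Op : Oplus S p).
  { split; auto. intros e he. apply hp. left; exists e; auto. }
  assert (notG : forall G, Fc G -> ~ G p).
  { intros G FG. destruct (FcP G FG) as [_ [Gcl _]].
    assert (h : LU S G p).
    { apply Gcl. split; auto. intros A pA. apply NNPP; intro hn.
      assert (AS := filt_sub S p A (ultra_filt S p Hp) pA).
      apply (ultra_notboth S p A Hp pA). apply hp. right. split.
      intros x [h _]; auto. exists G; split; auto.
      intros q Lq. apply ultra_not; auto. apply Oplus_ultra; destruct Lq; auto.
      intro qA; apply hn; exists q; auto. }
    destruct h; auto. }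
  split; [|split].
  - exists p; split; auto. intros [G [FG Gp]]. apply (notG G FG Gp).
  - intros p' hp'. split.
    + apply (Cl_Oplus S (LU S (fun x => exists G, Fc G /\ G x))); auto. intros q [a _]; auto.
    + intros [G [FG Gp']]. destruct (FcP G FG) as [_ [Gcl _]].
      assert (h : LU S G p').
      { apply Gcl. apply (Cl_mono S (LU S (fun x => exists G, Fc G /\ G x))); auto.
        intros q [a b]; split; auto. intro Gq; apply b; exists G; auto. }
      destruct h; auto.
  - intros r q Or [Oq nq]. split. apply uplus_Oplus; auto.
    intros [G [FG Gp]]. destruct (FcP G FG) as [_ [_ Gl]].
    assert (h : LU S G (uplus S r q)).
    { apply Gl; auto. split; auto. intro Gq; apply nq; exists G; auto. }
    destruct h; auto. }
destruct PU as [[q [Oq nUq]] [Ucl Ul]].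
exists q. split; auto. intros r Or.
set (q' := uplus S r q).
assert (Lq' : LU S U q') by (apply Ul; auto; split; auto).
assert (Oq' : Oplus S q') by (destruct Lq'; auto).
set (U' := fun p => ~ exists s, Oplus S s /\ uplus S s q' = p).
assert (PU' : PZ S U').
{ split; [|split].
  - exists (uplus S q q'); split. apply uplus_Oplus; auto. intro h; apply h. exists q; auto.
  - intros p hp. assert (Op : Oplus S p).
    { apply (Cl_Oplus S (LU S U')); auto. intros x [a _]; auto. }
    split; auto. intro hn; apply hn.
    apply img_closed; auto. apply Oplus_ultra; auto. apply Oplus_ultra; auto.
    intros A pA. destruct hp as [_ hp]. destruct (hp A pA) as [p'' [[_ h''] qA]].
    apply NNPP in h''. destruct h'' as [s [Os e]]. exists s; split; auto. rewrite e; auto.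
  - intros r0 p Or0 [Op hp]. split. apply uplus_Oplus; auto.
    intro hn; apply hp; intro h. apply hn. apply NNPP in hp. destruct hp as [s [Os e]].
    exists (uplus S r0 s); split. apply uplus_Oplus; auto.
    rewrite <- e. rewrite (uplus_assoc S r0 s q'); auto; apply Of; auto. }
assert (sub : forall x, U x -> U' x).
{ intros x Ux [s [Os e]]. assert (h : LU S U (uplus S s q')) by (apply Ul; auto).
  rewrite e in h. destruct h; auto. }
assert (sub2 : forall x, U' x -> U x).
{ apply NNPP; intro hn. apply (UM U' sub hn PU'). }
apply NNPP; intro hn. apply nUq. apply sub2. intros [s [Os e]]. apply hn. exists s; auto.
Qed.

Lemma dir1_n S q A n : dense_subsemigroup S -> Mset S q -> q A -> (1 <= n)%nat ->
  exists Fl delta, Fl <> nil /\ (forall t, In t Fl -> S t /\ 0 < t /\ t < / INR n) /\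
   0 < delta /\ delta < / INR n /\
   forall g, S g -> 0 < g -> g < delta -> q (fun y => S y /\ exists t, In t Fl /\ shift S t A (g + y)).
Proof.
intros HS [Oq Mq] qA hn.
set (eps := / INR n). assert (he : 0 < eps) by (apply inv_pos; auto).
set (I := {x : R | S x /\ 0 < x /\ x < eps}).
set (D := fun i : I => fun y => S y /\ q (shift S y (shift S (proj1_sig i) A))).
destruct (CL S I D HS) as [l [eta [heta cov]]].
- intros i y [h _]; auto.
- intros r Or. destruct (Mq r Or) as [s [Os e]].
  rewrite <- e in qA. destruct qA as [_ sX].
  destruct (filt_ne S s _ (Of S s Os) (filt_int S s _ _ (Of S s Os) sX (proj2 Os eps he)))
    as [x [[Sx [_ rD]] [_ [x0 xe]]]].
  exists (exist _ x (conj Sx (conj x0 xe))). exact rD.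
- exists (map (@proj1_sig _ _) l), (Rmin eta (eps / 2)).
  assert (hd : 0 < Rmin eta (eps/2)) by (apply Rmin_glb_lt; lra).
  assert (hd1 : Rmin eta (eps/2) <= eta) by apply Rmin_l.
  assert (hd2 : Rmin eta (eps/2) <= eps/2) by apply Rmin_r.
  split; [|split; [|split; [|split]]].
  + destruct (exists_small S _ HS hd) as [y [Sy [y0 ye]]].
    destruct (cov y Sy y0 ltac:(lra)) as [i [il _]].
    destruct l; [destruct il|]. simpl; discriminate.
  + intros t ht. apply in_map_iff in ht. destruct ht as [[x hx] [<- _]]. simpl. exact hx.
  + auto.
  + lra.
  + intros g Sg g0 gd. destruct (cov g Sg g0 ltac:(lra)) as [i [il [_ qi]]].
    apply (filt_sup S q _ _ (Of S q Oq) qi).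
    * intros y [Sy hy]; split; auto. exists (proj1_sig i); split; auto.
      apply in_map; auto.
    * intros y [h _]; auto.
Qed.

Lemma dir1 S q A : dense_subsemigroup S -> Mset S q -> q A -> PSNZ S A.
Proof.
intros HS Mq qA.
assert (Oq : Oplus S q) by (destruct Mq; auto).
assert (Fq := Of S q Oq).
assert (H : forall n, exists pr : list R * R, (1 <= n)%nat ->
   fst pr <> nil /\ (forall t, In t (fst pr) -> S t /\ 0 < t /\ t < / INR n) /\
   0 < snd pr /\ snd pr < / INR n /\
   forall g, S g -> 0 < g -> g < snd pr -> q (fun y => S y /\ exists t, In t (fst pr) /\ shift S t A (g + y))).
{ intros n. destruct (Compare_dec.le_lt_dec 1 n) as [hn|hn].
  - destruct (dir1_n S q A n HS Mq qA hn) as [Fl [d hh]]. exists (Fl, d); intros _; exact hh.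
  - exists (nil, 0); intros h; lia. }
set (F := fun n => fst (proj1_sig (constructive_indefinite_description _ (H n)))).
set (dl := fun n => snd (proj1_sig (constructive_indefinite_description _ (H n)))).
assert (HF : forall n, (1 <= n)%nat ->
   F n <> nil /\ (forall t, In t (F n) -> S t /\ 0 < t /\ t < / INR n) /\
   0 < dl n /\ dl n < / INR n /\
   forall g, S g -> 0 < g -> g < dl n -> q (fun y => S y /\ exists t, In t (F n) /\ shift S t A (g + y))).
{ intros n hn. unfold F, dl. destruct (constructive_indefinite_description _ (H n)) as [pr hpr]. simpl.
  apply hpr; auto. }
exists F, dl. split.
- intros n hn. destruct (HF n hn) as [a [b [c [d _]]]]; auto.
- intros G mu Gne GS hmu.
  set (Hg := fun g => fun x => S x /\ forall n, (1 <= n)%nat -> g < dl n -> exists t, In t (F n) /\ shift S t A (g + x)).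
  assert (qH : forall g, S g -> q (Hg g)).
  { intros g Sg. assert (g0 : 0 < g) by (destruct HS as [h _]; auto).
    destruct (arch g g0) as [N [N1 hN]].
    set (E := fun n => fun x => S x /\ ((1 <= n)%nat -> g < dl n -> exists t, In t (F n) /\ shift S t A (g + x))).
    assert (qE : forall n, q (E n)).
    { intros n. destruct (classic ((1 <= n)%nat /\ g < dl n)) as [[h1 h2]|h].
      - destruct (HF n h1) as [_ [_ [_ [_ h5]]]].
        apply (filt_sup S q _ _ Fq (h5 g Sg g0 h2)).
        + intros y [Sy hy]; split; auto.
        + intros y [hy _]; auto.
      - apply (filt_sup S q S); auto. apply (filt_S S q Fq).
        + intros y Sy; split; auto. intros h1 h2; exfalso; apply h; auto.
        + intros y [hy _]; auto. }
    apply (filt_sup S q _ _ Fq (filt_nat S q E N Fq qE)).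
    - intros x [Sx hx]. split; auto. intros n hn gd.
      destruct (Compare_dec.le_lt_dec N n) as [hN2|hN2].
      + exfalso. destruct (HF n hn) as [_ [_ [_ [h4 _]]]]. assert (h6 := hN n hN2). lra.
      + destruct (hx n hN2) as [_ h]. apply h; auto.
    - intros x [h _]; auto. }
  assert (qG : q (fun x => S x /\ forall B, In B (map Hg G) -> B x)).
  { apply filt_list; auto. intros B hB. apply in_map_iff in hB. destruct hB as [g [<- hg]].
    apply qH; auto. }
  destruct (filt_ne S q _ Fq (filt_int S q _ _ Fq qG (proj2 Oq mu hmu))) as [x [[Sx hx] [_ [x0 xm]]]].
  exists x; split; [|split; [|split]]; auto.
  intros n hn g hg g0 gd.
  assert (h := hx (Hg g) (in_map Hg G g hg)). destruct h as [_ h]. apply h; auto.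
Qed.

Lemma dir2 S A : dense_subsemigroup S -> subset A S -> PSNZ S A -> exists q, Mset S q /\ q A.
Proof.
intros HS AS [F [dl [h1 h2]]].
set (W := fun n g => fun x => S x /\ exists t, In t (F n) /\ shift S t A (g + x)).
set (Fam := fun B => (exists e, 0 < e /\ B = small S e) \/
   (exists n g, (1 <= n)%nat /\ S g /\ 0 < g /\ g < dl n /\ B = W n g)).
assert (A1 : forall B, Fam B -> subset B S).
{ intros B [[e [_ ->]]|[n [g [_ [_ [_ [_ ->]]]]]]] x [h _]; auto. }
assert (A2 : FIP S Fam).
{ intros L hL.
  assert (claim : exists eta G, 0 < eta /\ (forall g, In g G -> S g) /\ forall x, S x -> 0 < x -> x < eta ->
     (forall n, (1 <= n)%nat -> forall g, In g G -> 0 < g -> g < dl n -> exists t, In t (F n) /\ shift S t A (g + x)) ->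
     forall B, In B L -> B x).
  { clear -hL. induction L as [|C L IH].
    - exists 1, nil; split; [lra|split]. intros g []. intros x _ _ _ _ B [].
    - destruct IH as [eta [G [he [GS h]]]]. intros B hB; apply hL; simpl; auto.
      destruct (hL C (or_introl eq_refl)) as [[e [hee ->]]|[n [g [n1 [Sg [g0 [gd ->]]]]]]].
      + exists (Rmin eta e), G; split. apply Rmin_glb_lt; auto. split; auto.
        intros y Sy y0 ye nd B [<-|hB].
        * unfold small; split; auto. split; auto. assert (Rmin eta e <= e) by apply Rmin_r. lra.
        * apply h; auto. assert (Rmin eta e <= eta) by apply Rmin_l. lra.
      + exists eta, (g :: G); split; auto. split. intros g' [<-|hg']; auto.
        intros y Sy y0 ye nd B [<-|hB].
        * split; auto. apply nd; simpl; auto.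
        * apply h; auto. intros n' hn' g' hg'. apply nd; simpl; auto. }
  destruct claim as [eta [G [he [GS h]]]].
  destruct (exists_small S 1 HS ltac:(lra)) as [g1 [Sg1 _]].
  destruct (h2 (g1 :: G) eta) as [x [Sx [x0 [xe hx]]]]; auto.
  - discriminate.
  - intros g [<-|hg]; auto.
  - exists x; split; auto. intros B hB; apply h; auto.
    intros n hn g hg. apply hx; simpl; auto. }
destruct (UL S _ A1 A2) as [r [Hr hr]].
assert (Or : Oplus S r).
{ split; auto. intros e he. apply hr. left; exists e; auto. }
destruct (M_exists S HS) as [q0 Mq0].
assert (Oq0 : Oplus S q0) by (destruct Mq0; auto).
set (w := uplus S q0 r).
assert (Mw : Mset S w) by (apply M_right; auto).
assert (Ow : Oplus S w) by (destruct Mw; auto).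
assert (Hw : is_ultra S w) by (apply Oplus_ultra; auto).
assert (tn : forall n, (1 <= n)%nat -> exists t, In t (F n) /\ w (shift S t A)).
{ intros n hn. apply (ultra_union S w (fun t => shift S t A) (F n) Hw).
  - intros t y [h _]; auto.
  - split. intros y [h _]; auto.
    destruct (h1 n hn) as [_ [_ [d0 _]]].
    apply (filt_sup S q0 _ _ (Of S q0 Oq0) (proj2 Oq0 (dl n) d0)).
    + intros g [Sg [g0 gd]]. split; auto.
      apply (filt_sup S r _ _ (ultra_filt S r Hr) (hr (W n g) (or_intror (ex_intro _ n (ex_intro _ g (conj hn (conj Sg (conj g0 (conj gd eq_refl))))))))).
      * intros x [Sx [t [ht sh]]]. split; auto. split; [destruct sh; auto|]. exists t; split; auto.
      * intros x [h _]; auto.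
    + intros g [h _]; auto. }
set (T := fun t => S t /\ w (shift S t A)).
set (Fam2 := fun B => B = T \/ exists e, 0 < e /\ B = small S e).
assert (B1 : forall B, Fam2 B -> subset B S).
{ intros B [->|[e [_ ->]]] x [h _]; auto. }
assert (B2 : FIP S Fam2).
{ intros L hL.
  assert (claim : exists eta, 0 < eta /\ forall x, S x -> 0 < x -> x < eta -> T x -> forall B, In B L -> B x).
  { clear -hL. induction L as [|C L IH].
    - exists 1; split; [lra|]. intros x _ _ _ _ B [].
    - destruct IH as [eta [he h]]. intros B hB; apply hL; simpl; auto.
      destruct (hL C (or_introl eq_refl)) as [->|[e [hee ->]]].
      + exists eta; split; auto. intros x Sx x0 xe Tx B [<-|hB]; auto. apply h; auto.
      + exists (Rmin eta e); split. apply Rmin_glb_lt; auto.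
        intros x Sx x0 xe Tx B [<-|hB].
        * unfold small; split; auto. split; auto. assert (Rmin eta e <= e) by apply Rmin_r. lra.
        * apply h; auto. assert (Rmin eta e <= eta) by apply Rmin_l. lra. }
  destruct claim as [eta [he h]].
  destruct (arch eta he) as [N [N1 hN]].
  destruct (tn N N1) as [t [ht wt]].
  destruct (h1 N N1) as [_ [hF _]]. destruct (hF t ht) as [St [t0 tN]].
  exists t; split; auto. intros B hB; apply h; auto. assert (hh := hN N (le_n N)). lra.
  split; auto. }
destruct (UL S _ B1 B2) as [v [Hv hv]].
assert (Ov : Oplus S v).
{ split; auto. intros e he. apply hv. right; exists e; auto. }
exists (uplus S v w). split.
- apply M_left; auto.
- split; auto. apply hv. left; reflexivity.
Qed.

Lemma ClK_ClM S p : dense_subsemigroup S -> (Cl S (K_Oplus S) p <-> Cl S (Mset S) p).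
Proof.
intros HS. destruct (M_exists S HS) as [q0 Mq0].
split; apply Cl_mono; intros q h.
- apply K_M; eauto.
- apply M_K; auto.
Qed.

Lemma ClM_Kbar S p : dense_subsemigroup S -> (Cl S (Mset S) p <-> Kbar S (Kfam S) p).
Proof.
intros HS. split.
- intros [Hp HC]. split; auto. intros A [AS nA].
  apply NNPP; intro hn. assert (h := ultra_not S p A Hp AS hn).
  destruct (HC _ h) as [q [Mq qh]]. apply nA. apply (dir1 S q); auto.
- intros [Hp HK]. split; auto. intros A pA.
  assert (AS := filt_sub S p A (ultra_filt S p Hp) pA).
  destruct (classic (PSNZ S A)) as [h|h].
  + destruct (dir2 S A HS AS h) as [q [Mq qA]]; eauto.
  + exfalso. apply (ultra_notboth S p A Hp pA). apply HK. split.
    * intros x [hx _]; auto.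
    * intro hP. apply h.
      destruct (dir2 S _ HS (fun x (hx : S x /\ ~ (S x /\ ~ A x)) => proj1 hx) hP) as [q [Mq qA]].
      apply (dir1 S q); auto. apply (filt_sup S q _ _ (Of S q (proj1 Mq)) qA); auto.
      intros x [Sx n]. apply NNPP; intro na; apply n; auto.
Qed.

Theorem lemma3p5 (S : rset) (HS : dense_subsemigroup S) :
  is_filter S (Kfam S) /\
  (forall p, Cl S (K_Oplus S) p <-> Kbar S (Kfam S) p) /\
  compact_subsemigroup S (Kbar S (Kfam S)).
Proof.
destruct (M_exists S HS) as [q0 Mq0].
assert (Oq0 : Oplus S q0) by (destruct Mq0; auto).
assert (Main : forall p, Cl S (K_Oplus S) p <-> Kbar S (Kfam S) p).
{ intros p. rewrite ClK_ClM; auto. apply ClM_Kbar; auto. }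
split; [|split; auto].
- split; [|split; [|split; [|split]]].
  + intros A [h _]; auto.
  + split. intros x h; auto. intro hP.
    destruct (dir2 S _ HS (fun x (hx : S x /\ ~ S x) => proj1 hx) hP) as [q [Mq qA]].
    destruct (filt_ne S q _ (Of S q (proj1 Mq)) qA) as [x [a b]]; auto.
  + intros [_ nP]. apply nP. apply (dir1 S q0); auto.
    apply (filt_sup S q0 S). apply Of; auto. apply (filt_S S q0 (Of S q0 Oq0)).
    intros x Sx; split; auto. intros x [h _]; auto.
  + intros A B [AS nA] [BS nB]. split. intros x [h _]; auto. intro hP.
    destruct (dir2 S _ HS (fun x (hx : S x /\ ~ (A x /\ B x)) => proj1 hx) hP) as [q [Mq qAB]].
    assert (Hq : is_ultra S q) by (apply Oplus_ultra; destruct Mq; auto).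
    destruct (ultra_dich S q A Hq AS) as [qA|qA].
    * destruct (ultra_dich S q B Hq BS) as [qB|qB].
      -- apply (ultra_notboth S q (fun x => A x /\ B x) Hq); auto.
         apply (filt_int S q); auto. apply ultra_filt; auto.
      -- apply nB. apply (dir1 S q); auto.
    * apply nA. apply (dir1 S q); auto.
  + intros A B [AS nA] AB BS. split; auto. intro hP.
    destruct (dir2 S _ HS (fun x (hx : S x /\ ~ B x) => proj1 hx) hP) as [q [Mq qB]].
    apply nA. apply (dir1 S q); auto.
    apply (filt_sup S q _ _ (Of S q (proj1 Mq)) qB). intros x [Sx n]; split; auto.
    intros x [h _]; auto.
- split; [|split; [|split]].
  + intros p [h _]; auto.
  + exists q0. apply ClM_Kbar; auto. split. apply Oplus_ultra; auto. intros A qA; exists q0; auto.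
  + intros p q hp hq. apply ClM_Kbar in hp; auto. apply ClM_Kbar in hq; auto. apply ClM_Kbar; auto.
    assert (Oq : Oplus S q) by (apply (Cl_Oplus S (Mset S)); auto; intros x [a _]; auto).
    split. apply uplus_ultra; auto. destruct hp; auto. destruct hq; auto.
    intros A [AS pD]. destruct hp as [_ hp]. destruct (hp _ pD) as [k [Mk kD]].
    exists (uplus S k q); split. apply M_right; auto. split; auto.
  + intros I U Uopen cover. apply NNPP; intro H.
    assert (H' : forall l : list I, exists p, Kbar S (Kfam S) p /\ forall i, In i l -> ~ U i p).
    { intros l. apply NNPP; intro hn. apply H. exists l. intros p Xp. apply NNPP; intro hn2.
      apply hn. exists p; split; auto. intros i hi Ui. apply hn2; exists i; auto. }
    set (Fam := fun B => Kfam S B \/ exists i A', subset A' S /\ (forall q, is_ultra S q -> q A' -> U i q) /\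
       B = fun x => S x /\ ~ A' x).
    assert (A1 : forall B, Fam B -> subset B S).
    { intros B [[h _]|[i [A' [_ [_ ->]]]]]; auto. intros x [h _]; auto. }
    assert (A2 : FIP S Fam).
    { intros L hL.
      assert (claim : exists l, forall p, Kbar S (Kfam S) p -> (forall i, In i l -> ~ U i p) -> forall B, In B L -> p B).
      { clear -hL. induction L as [|C L IH].
        - exists nil. intros p _ _ B [].
        - destruct IH as [l h]. intros B hB; apply hL; simpl; auto.
          destruct (hL C (or_introl eq_refl)) as [KC|[i [A' [AS [nb ->]]]]].
          + exists l. intros p Xp nU B [<-|hB]. destruct Xp as [_ a]; auto. apply h; auto.
          + exists (i :: l). intros p Xp nU B [<-|hB].
            * destruct Xp as [Hp _]. apply ultra_not; auto. intro pA. apply (nU i); simpl; auto.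
            * apply h; auto. intros j hj; apply nU; simpl; auto. }
      destruct claim as [l h]. destruct (H' l) as [p [Xp nU]].
      assert (Fp : is_filter S p) by (destruct Xp as [[a _] _]; auto).
      destruct (filt_ne2 S p _ Fp (filt_list S p L Fp (h p Xp nU))) as [x [Sx [_ hx]]].
      exists x; split; auto. }
    destruct (UL S _ A1 A2) as [p [Hp hp]].
    assert (Xp : Kbar S (Kfam S) p).
    { split; auto. intros A KA. apply hp; left; auto. }
    destruct (cover p Xp) as [i Ui].
    destruct (Uopen i p Ui) as [_ [A' [pA nb]]].
    apply (ultra_notboth S p A' Hp pA). apply hp. right. exists i, A'. split; [|split]; auto.
    apply (filt_sub S p A' (ultra_filt S p Hp) pA).
Qed.
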